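(* Let $\varepsilon$ be a locally variational source form on $\mathbb{R}\times T^2M$ and let $\alpha'$ be the $2$-form on $T^1M$ given in charts by $\alpha'=\tfrac12 D\,dx\wedge dy+(B_{xx}dx+B_{xy}dy)\wedge d\dot x+(B_{xy}dx+B_{yy}dy)\wedge d\dot y$. Then in every fibered chart $(t,x,y)$ (on its domain) one has $\alpha'-\omega=d\kappa$, where $$\omega=\tfrac12\,D(x,y,0,0)\,dx\wedge dy,$$ $$\kappa=-\Big(\int_0^{\dot x}B_{xx}(x,y,\nu,\dot y)\,d\nu+\int_0^{\dot y}B_{xy}(x,y,0,\sigma)\,d\sigma\Big)dx-\Big(\int_0^{\dot x}B_{xy}(x,y,\nu,\dot y)\,d\nu+\int_0^{\dot y}B_{yy}(x,y,0,\sigma)\,d\sigma\Big)dy.$$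
   Context: Setting: $M$ is a smooth connected $2$-manifold, $Y=\mathbb{R}\times M$; $J^{1}Y\cong\mathbb{R}\times T^{1}M$, $J^{2}Y\cong\mathbb{R}\times T^{2}M$, with chart coordinates $(t,x,y,\dot x,\dot y)$, $(t,x,y,\dot x,\dot y,\ddot x,\ddot y)$ induced by charts $(x,y)$ on $M$; charts are assumed to have domains on which the segment integrals below make sense (e.g. rectangular in the velocity variables). Contact forms $\omega^x=dx-\dot x dt$, $\omega^y=dy-\dot y dt$. A source form $\varepsilon=(\varepsilon_x\omega^x+\varepsilon_y\omega^y)\wedge dt$ on $\mathbb{R}\times T^2M$ is locally variational iff locally it is the Euler–Lagrange form of a first-order Lagrangian; equivalently in every chart $\varepsilon_x=A_x+B_{xx}\ddot x+B_{xy}\ddot y$, $\varepsilon_y=A_y+B_{xy}\ddot x+B_{yy}\ddot y$ with $A_x,A_y,B_{xx},B_{xy},B_{yy}$ functions of $(x,y,\dot x,\dot y)$ satisfying the Helmholtz conditions: $\partial B_{xx}/\partial\dot y=\partial B_{xy}/\partial\dot x$, $\partial B_{yy}/\partial\dot x=\partial B_{xy}/\partial\dot y$, $\partial A_x/\partial\dot x-\dot x\,\partial B_{xx}/\partial x-\dot y\,\partial B_{xx}/\partial y=0$, $\partial A_y/\partial\dot y-\dot x\,\partial B_{yy}/\partial x-\dot y\,\partial B_{yy}/\partial y=0$, $\partial A_x/\partial\dot y+\partial A_y/\partial\dot x-2\dot x\,\partial B_{xy}/\partial x-2\dot y\,\partial B_{xy}/\partial y=0$, $\partial A_x/\partial y-\partial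 A_y/\partial x-\frac12\dot x\,\partial_x D-\frac12\dot y\,\partial_y D=0$, where $D=\partial A_x/\partial\dot y-\partial A_y/\partial\dot x$ (a function of $(x,y,\dot x,\dot y)$). *)

(* Defs.v *)
From Stdlib Require Import Reals ClassicalEpsilon.
Open Scope R_scope.

(** Chart-level setting.  A fibered chart (t,x,y) on Y = R x M induces
    coordinates (x, y, xd, yd) = (x, y, xdot, ydot) on T^1 M; the
    coefficient functions of the source form depend only on these. *)
Definition F4 := R -> R -> R -> R -> R.
Definition Dom4 := R -> R -> R -> R -> Prop.

(** Partial derivatives (the value of the derivative when it exists;
    chosen arbitrarily otherwise -- smoothness hypotheses guarantee existence). *)
Definition pd_x (f : F4) : F4 := fun x y xd yd =>
  epsilon (inhabits 0) (fun l => derivable_pt_lim (fun t => f t y xd yd) x l).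
Definition pd_y (f : F4) : F4 := fun x y xd yd =>
  epsilon (inhabits 0) (fun l => derivable_pt_lim (fun t => f x t xd yd) y l).
Definition pd_xd (f : F4) : F4 := fun x y xd yd =>
  epsilon (inhabits 0) (fun l => derivable_pt_lim (fun t => f x y t yd) xd l).
Definition pd_yd (f : F4) : F4 := fun x y xd yd =>
  epsilon (inhabits 0) (fun l => derivable_pt_lim (fun t => f x y xd t) yd l).

Definition has_partials_on (W : Dom4) (f : F4) : Prop :=
  forall x y xd yd, W x y xd yd ->
    (exists l, derivable_pt_lim (fun t => f t y xd yd) x l) /\
    (exists l, derivable_pt_lim (fun t => f x t xd yd) y l) /\
    (exists l, derivable_pt_lim (fun t => f x y t yd) xd l) /\
    (exists l, derivable_pt_lim (fun t => f x y xd t) yd l).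

Definition cont_on (W : Dom4) (f : F4) : Prop :=
  forall x y xd yd, W x y xd yd ->
    forall eps, 0 < eps -> exists delta, 0 < delta /\
      forall x' y' xd' yd', W x' y' xd' yd' ->
        Rabs (x' - x) < delta -> Rabs (y' - y) < delta ->
        Rabs (xd' - xd) < delta -> Rabs (yd' - yd) < delta ->
        Rabs (f x' y' xd' yd' - f x y xd yd) < eps.

Fixpoint Ck_on (W : Dom4) (k : nat) (f : F4) : Prop :=
  match k with
  | O => cont_on W f
  | S k' => cont_on W f /\ has_partials_on W f /\
            Ck_on W k' (pd_x f) /\ Ck_on W k' (pd_y f) /\
            Ck_on W k' (pd_xd f) /\ Ck_on W k' (pd_yd f)
  end.

Definition smooth_on (W : Dom4) (f : F4) : Prop := forall k, Ck_on W k f.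

Definition open4 (W : Dom4) : Prop :=
  forall x y xd yd, W x y xd yd -> exists delta, 0 < delta /\
    forall x' y' xd' yd',
      Rabs (x' - x) < delta -> Rabs (y' - y) < delta ->
      Rabs (xd' - xd) < delta -> Rabs (yd' - yd) < delta ->
      W x' y' xd' yd'.

(** The chart domain contains the segments used in the integrals:
    nu in [0, xd] at fixed yd, and sigma in [0, yd] at xd = 0. *)
Definition segment_domain (W : Dom4) : Prop :=
  forall x y xd yd, W x y xd yd ->
    forall s, 0 <= s <= 1 -> W x y (s * xd) yd /\ W x y 0 (s * yd).

Definition Rint (f : R -> R) (a b : R) : R :=
  epsilon (inhabits 0)
    (fun l => exists pr : Riemann_integrable f a b, RiemannInt pr = l).

Definition Dfun (Ax Ay : F4) : F4 := fun x y xd yd =>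
  pd_yd Ax x y xd yd - pd_xd Ay x y xd yd.

Definition helmholtz (W : Dom4) (Ax Ay Bxx Bxy Byy : F4) : Prop :=
  forall x y xd yd, W x y xd yd ->
    pd_yd Bxx x y xd yd = pd_xd Bxy x y xd yd /\
    pd_xd Byy x y xd yd = pd_yd Bxy x y xd yd /\
    pd_xd Ax x y xd yd - xd * pd_x Bxx x y xd yd - yd * pd_y Bxx x y xd yd = 0 /\
    pd_yd Ay x y xd yd - xd * pd_x Byy x y xd yd - yd * pd_y Byy x y xd yd = 0 /\
    pd_yd Ax x y xd yd + pd_xd Ay x y xd yd
      - 2 * xd * pd_x Bxy x y xd yd - 2 * yd * pd_y Bxy x y xd yd = 0 /\
    pd_y Ax x y xd yd - pd_x Ay x y xd yd
      - / 2 * xd * pd_x (Dfun Ax Ay) x y xd yd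
      - / 2 * yd * pd_y (Dfun Ax Ay) x y xd yd = 0.

(** Differential forms on the chart domain, in the coordinate coframe
    (dx, dy, dxd, dyd).  A 2-form is given by its coefficients on
    dx^dy, dx^dxd, dx^dyd, dy^dxd, dy^dyd, dxd^dyd. *)
Record form1 := Form1 { f1_x : F4; f1_y : F4; f1_xd : F4; f1_yd : F4 }.
Record form2 := Form2 { f2_xy : F4; f2_xxd : F4; f2_xyd : F4;
                        f2_yxd : F4; f2_yyd : F4; f2_xdyd : F4 }.

Definition sub2 (a b : form2) : form2 :=
  Form2 (fun x y u v => f2_xy a x y u v - f2_xy b x y u v)
        (fun x y u v => f2_xxd a x y u v - f2_xxd b x y u v)
        (fun x y u v => f2_xyd a x y u v - f2_xyd b x y u v)
        (fun x y u v => f2_yxd a x y u v - f2_yxd b x y u v)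
        (fun x y u v => f2_yyd a x y u v - f2_yyd b x y u v)
        (fun x y u v => f2_xdyd a x y u v - f2_xdyd b x y u v).

Definition dform1 (k : form1) : form2 :=
  Form2 (fun x y u v => pd_x (f1_y k) x y u v - pd_y (f1_x k) x y u v)
        (fun x y u v => pd_x (f1_xd k) x y u v - pd_xd (f1_x k) x y u v)
        (fun x y u v => pd_x (f1_yd k) x y u v - pd_yd (f1_x k) x y u v)
        (fun x y u v => pd_y (f1_xd k) x y u v - pd_xd (f1_y k) x y u v)
        (fun x y u v => pd_y (f1_yd k) x y u v - pd_yd (f1_y k) x y u v)
        (fun x y u v => pd_xd (f1_yd k) x y u v - pd_yd (f1_xd k) x y u v).

Definition form1_has_partials_on (W : Dom4) (k : form1) : Prop :=
  has_partials_on W (f1_x k) /\ has_partials_on W (f1_y k) /\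
  has_partials_on W (f1_xd k) /\ has_partials_on W (f1_yd k).

Definition form2_eq_on (W : Dom4) (a b : form2) : Prop :=
  forall x y u v, W x y u v ->
    f2_xy a x y u v = f2_xy b x y u v /\ f2_xxd a x y u v = f2_xxd b x y u v /\
    f2_xyd a x y u v = f2_xyd b x y u v /\ f2_yxd a x y u v = f2_yxd b x y u v /\
    f2_yyd a x y u v = f2_yyd b x y u v /\ f2_xdyd a x y u v = f2_xdyd b x y u v.

Definition alpha' (Ax Ay Bxx Bxy Byy : F4) : form2 :=
  Form2 (fun x y u v => / 2 * Dfun Ax Ay x y u v)
        Bxx Bxy Bxy Byy (fun _ _ _ _ => 0).

Definition omega (Ax Ay : F4) : form2 :=
  Form2 (fun x y _ _ => / 2 * Dfun Ax Ay x y 0 0)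
        (fun _ _ _ _ => 0) (fun _ _ _ _ => 0) (fun _ _ _ _ => 0)
        (fun _ _ _ _ => 0) (fun _ _ _ _ => 0).

Definition kappa (Bxx Bxy Byy : F4) : form1 :=
  Form1 (fun x y xd yd => - (Rint (fun nu => Bxx x y nu yd) 0 xd
                             + Rint (fun s => Bxy x y 0 s) 0 yd))
        (fun x y xd yd => - (Rint (fun nu => Bxy x y nu yd) 0 xd
                             + Rint (fun s => Byy x y 0 s) 0 yd))
        (fun _ _ _ _ => 0) (fun _ _ _ _ => 0).

(* Main.v *)
Require Import Defs.
From Stdlib Require Import Reals Lra ClassicalEpsilon FunctionalExtensionality.
From Coquelicot Require Import Coquelicot.
Open Scope R_scope.

Definition P4 := (R * R * R * R)%type.
Inductive crd := C1 | C2 | C3 | C4.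
Definition get (i : crd) (p : P4) : R :=
  match p with (x, y, u, v) => match i with C1 => x | C2 => y | C3 => u | C4 => v end end.
Definition upd (i : crd) (t : R) (p : P4) : P4 :=
  match p with (x, y, u, v) =>
    match i with C1 => (t, y, u, v) | C2 => (x, t, u, v) | C3 => (x, y, t, v) | C4 => (x, y, u, t) end end.
Definition unc (f : F4) (p : P4) : R := match p with (x, y, u, v) => f x y u v end.
Definition uW (W : Dom4) (p : P4) : Prop := match p with (x, y, u, v) => W x y u v end.
Definition pdF (i : crd) (f : F4) : F4 :=
  match i with C1 => pd_x f | C2 => pd_y f | C3 => pd_xd f | C4 => pd_yd f end.
Definition close (d : R) (q p : P4) : Prop := forall i, Rabs (get i q - get i p) < d.

Lemma get_upd i t p : get i (upd i t p) = t.
Proof. destruct p as [[[x y] u] v]; destruct i; reflexivity. Qed.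
Lemma get_upd_ne i j t p : i <> j -> get i (upd j t p) = get i p.
Proof. destruct p as [[[x y] u] v]; destruct i, j; simpl; congruence. Qed.
Lemma upd_upd i t s p : upd i t (upd i s p) = upd i t p.
Proof. destruct p as [[[x y] u] v]; destruct i; reflexivity. Qed.
Lemma upd_comm i j t s p : i <> j -> upd i t (upd j s p) = upd j s (upd i t p).
Proof. destruct p as [[[x y] u] v]; destruct i, j; simpl; congruence. Qed.
Lemma upd_get i p : upd i (get i p) p = p.
Proof. destruct p as [[[x y] u] v]; destruct i; reflexivity. Qed.

Lemma loc_of (P : R -> Prop) x :
  (exists d, 0 < d /\ forall t, Rabs (t - x) < d -> P t) -> locally x P.
Proof. intros [d [Hd H]]. exists (mkposreal d Hd). intros t Ht. apply H. exact Ht. Qed.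

Lemma cont_of (h : R -> R) x :
  (forall eps, 0 < eps -> exists d, 0 < d /\ forall t, Rabs (t - x) < d -> Rabs (h t - h x) < eps) ->
  continuous h x.
Proof.
  intros H. apply filterlim_locally. intros eps. apply loc_of.
  destruct (H eps (cond_pos eps)) as [d [Hd Hd']]. exists d; split; auto.
Qed.

Lemma isd_plus (f g : R -> R) (x a b : R) : is_derive f x a -> is_derive g x b ->
  is_derive (fun t => f t + g t) x (a + b).
Proof. intros; apply (is_derive_plus f g x a b); auto. Qed.
Lemma isd_minus (f g : R -> R) (x a b : R) : is_derive f x a -> is_derive g x b ->
  is_derive (fun t => f t - g t) x (a - b).
Proof. intros; apply (is_derive_minus f g x a b); auto. Qed.
Lemma isd_opp (f : R -> R) (x a : R) : is_derive f x a -> is_derive (fun t => - f t) x (- a).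
Proof. intros; apply (is_derive_opp f x a); auto. Qed.
Lemma isd_mult (f g : R -> R) (x a b : R) : is_derive f x a -> is_derive g x b ->
  is_derive (fun t => f t * g t) x (a * g x + f x * b).
Proof. intros; apply (is_derive_mult f g x a b); auto. intros; apply Rmult_comm. Qed.
Lemma isd_scal (f : R -> R) (x k a : R) : is_derive f x a -> is_derive (fun t => k * f t) x (k * a).
Proof. intros; apply is_derive_scal; auto. Qed.
Lemma isd_const (c x : R) : is_derive (fun _ => c) x 0.
Proof. apply (is_derive_const c x). Qed.
Lemma isd_id (x : R) : is_derive (fun t => t) x 1.
Proof. apply (is_derive_id x). Qed.
Lemma isd_val (f : R -> R) (x a b : R) : is_derive f x a -> a = b -> is_derive f x b.
Proof. intros; subst; auto. Qed.

Lemma eps_deriv (g : R -> R) a l : is_derive g a l ->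
  epsilon (inhabits 0) (fun l => derivable_pt_lim g a l) = l.
Proof.
  intros H. apply is_derive_Reals in H.
  assert (E : exists l, derivable_pt_lim g a l) by eauto.
  pose proof (epsilon_spec (inhabits 0) _ E) as S.
  eapply uniqueness_limite; eauto.
Qed.

Lemma pdF_eq i f p l : is_derive (fun t => unc f (upd i t p)) (get i p) l ->
  unc (pdF i f) p = l.
Proof.
  destruct p as [[[x y] u] v]; destruct i; simpl; intros H; apply eps_deriv; exact H.
Qed.

Definition exd (W : Dom4) (f : F4) : Prop :=
  forall i p, uW W p -> ex_derive (fun t => unc f (upd i t p)) (get i p).
Definition contg (W : Dom4) (f : F4) : Prop :=
  forall p, uW W p -> forall eps, 0 < eps -> exists d, 0 < d /\
    forall q, uW W q -> close d q p -> Rabs (unc f q - unc f p) < eps.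
Definition openg (W : Dom4) : Prop :=
  forall p, uW W p -> exists d, 0 < d /\ forall q, close d q p -> uW W q.

Lemma hp_exd W f : has_partials_on W f -> exd W f.
Proof.
  intros H i [[[x y] u] v] Hp. simpl in Hp.
  destruct (H x y u v Hp) as [[l1 H1] [[l2 H2] [[l3 H3] [l4 H4]]]].
  destruct i; simpl; [exists l1|exists l2|exists l3|exists l4]; apply is_derive_Reals; auto.
Qed.
Lemma exd_hp W f : exd W f -> has_partials_on W f.
Proof.
  intros H x y u v Hp.
  destruct (H C1 (x,y,u,v) Hp) as [l1 H1]; destruct (H C2 (x,y,u,v) Hp) as [l2 H2];
  destruct (H C3 (x,y,u,v) Hp) as [l3 H3]; destruct (H C4 (x,y,u,v) Hp) as [l4 H4].
  simpl in *. repeat split; [exists l1|exists l2|exists l3|exists l4]; apply is_derive_Reals; auto.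
Qed.
Lemma cont_contg W f : cont_on W f -> contg W f.
Proof.
  intros H [[[x y] u] v] Hp eps He. destruct (H x y u v Hp eps He) as [d [Hd Hd']].
  exists d; split; auto. intros [[[x' y'] u'] v'] Hq Hc. simpl.
  apply Hd'; auto; [apply (Hc C1)|apply (Hc C2)|apply (Hc C3)|apply (Hc C4)].
Qed.
Lemma open_openg W : open4 W -> openg W.
Proof.
  intros H [[[x y] u] v] Hp. destruct (H x y u v Hp) as [d [Hd Hd']].
  exists d; split; auto. intros [[[x' y'] u'] v'] Hc. simpl.
  apply Hd'; [apply (Hc C1)|apply (Hc C2)|apply (Hc C3)|apply (Hc C4)].
Qed.

Lemma crd_dec (i j : crd) : {i = j} + {i <> j}.
Proof. decide equality. Qed.

Lemma close_upd d i t p : 0 < d -> Rabs (t - get i p) < d -> close d (upd i t p) p.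
Proof.
  intros Hd Ht j. destruct (crd_dec j i) as [->|n].
  - rewrite get_upd; auto.
  - rewrite get_upd_ne; auto. unfold Rminus; rewrite Rplus_opp_r, Rabs_R0; auto.
Qed.
Lemma close_upd2 d i j a b p : i <> j -> 0 < d -> Rabs (a - get i p) < d -> Rabs (b - get j p) < d ->
  close d (upd i a (upd j b p)) p.
Proof.
  intros n Hd Ha Hb k. destruct (crd_dec k i) as [->|n1].
  - rewrite get_upd; auto.
  - rewrite get_upd_ne; auto. destruct (crd_dec k j) as [->|n2].
    + rewrite get_upd; auto.
    + rewrite get_upd_ne; auto. unfold Rminus; rewrite Rplus_opp_r, Rabs_R0; auto.
Qed.

Lemma loc_W W i p : openg W -> uW W p ->
  exists d, 0 < d /\ forall t, Rabs (t - get i p) < d -> uW W (upd i t p).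
Proof.
  intros Ho Hp. destruct (Ho p Hp) as [d [Hd H]]. exists d; split; auto.
  intros t Ht. apply H. apply close_upd; auto.
Qed.

Lemma locally_W W i p : openg W -> uW W p -> locally (get i p) (fun t => uW W (upd i t p)).
Proof. intros Ho Hp. apply loc_of. apply loc_W; auto. Qed.

Lemma slice_cont W f i p : openg W -> contg W f -> uW W p ->
  continuous (fun t => unc f (upd i t p)) (get i p).
Proof.
  intros Ho Hc Hp. apply cont_of. intros eps He.
  destruct (Hc p Hp eps He) as [d1 [Hd1 H1]]. destruct (Ho p Hp) as [d2 [Hd2 H2]].
  exists (Rmin d1 d2); split. apply Rmin_pos; auto.
  intros t Ht. rewrite upd_get. apply H1.
  - apply H2. apply close_upd; auto. eapply Rlt_le_trans; eauto. apply Rmin_r.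
  - apply close_upd; auto. eapply Rlt_le_trans; eauto. apply Rmin_l.
Qed.

Lemma pdF_isd W f i p : exd W f -> uW W p ->
  is_derive (fun t => unc f (upd i t p)) (get i p) (unc (pdF i f) p).
Proof.
  intros He Hp. destruct (He i p Hp) as [l Hl].
  rewrite (pdF_eq i f p l Hl). exact Hl.
Qed.

Lemma LE W f (G : P4 -> R) i p l : openg W -> uW W p ->
  (forall q, uW W q -> unc f q = G q) ->
  is_derive (fun t => G (upd i t p)) (get i p) l -> unc (pdF i f) p = l.
Proof.
  intros Ho Hp HG Hd. apply pdF_eq. eapply is_derive_ext_loc; [|exact Hd].
  generalize (locally_W W i p Ho Hp). apply filter_imp. intros t Ht. symmetry. apply HG; auto.
Qed.

Definition C2g (W : Dom4) (f : F4) : Prop :=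
  contg W f /\ exd W f /\
  (forall i, contg W (pdF i f) /\ exd W (pdF i f) /\ forall j, contg W (pdF j (pdF i f))).

Lemma smooth_C2 W f : smooth_on W f -> C2g W f.
Proof.
  intros H. specialize (H 2%nat). simpl in H.
  destruct H as [c0 [h0 [[c1 [h1 [d11 [d12 [d13 d14]]]]] [[c2 [h2 [d21 [d22 [d23 d24]]]]]
     [[c3 [h3 [d31 [d32 [d33 d34]]]]] [c4 [h4 [d41 [d42 [d43 d44]]]]]]]]]].
  split; [apply cont_contg; auto|]. split; [apply hp_exd; auto|].
  intros i; destruct i; simpl; (split; [apply cont_contg; auto|]); (split; [apply hp_exd; auto|]);
    intros j; destruct j; simpl; apply cont_contg; auto.
Qed.

Ltac brute := let p := fresh "p" in
  repeat match goal with
  | q : P4 |- _ => destruct q as [[[? ?] ?] ?]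
  | i : crd |- _ => destruct i
  end; simpl; try congruence; try reflexivity.

Lemma DD W f i j q : openg W -> C2g W f -> uW W q -> i <> j ->
  Derive (fun z => Derive (fun t => unc f (upd j t (upd i z q))) (get j q)) (get i q)
  = unc (pdF i (pdF j f)) q.
Proof.
  intros Ho [Hc [He Hi]] Hq n.
  rewrite (Derive_ext_loc _ (fun z => unc (pdF j f) (upd i z q))).
  - apply is_derive_unique. apply (pdF_isd W); auto. apply (Hi j).
  - generalize (locally_W W i q Ho Hq). apply filter_imp. intros z Hz.
    apply is_derive_unique.
    assert (E : get j q = get j (upd i z q)) by (rewrite get_upd_ne; auto).
    rewrite E. apply (pdF_isd W); auto.
Qed.

Lemma cont2 W g i j p d (H : R -> R -> R) : contg W g -> uW W p -> i <> j -> 0 < d ->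
  (forall a b, Rabs (a - get i p) < d -> Rabs (b - get j p) < d -> uW W (upd i a (upd j b p))) ->
  (forall a b, Rabs (a - get i p) < d -> Rabs (b - get j p) < d -> H a b = unc g (upd i a (upd j b p))) ->
  continuity_2d_pt H (get i p) (get j p).
Proof.
  intros Hc Hp n Hd HW HH eps. destruct (Hc p Hp eps (cond_pos eps)) as [d1 [Hd1 H1]].
  assert (Hm : 0 < Rmin d d1) by (apply Rmin_pos; auto).
  exists (mkposreal _ Hm). simpl. intros a b Ha Hb.
  assert (Ep1 : upd i (get i p) (upd j (get j p) p) = p) by (clear -n; brute).
  rewrite HH, HH, Ep1. 2,3: unfold Rminus; rewrite Rplus_opp_r, Rabs_R0; auto.
  2,3: eapply Rlt_le_trans; eauto; apply Rmin_l.
  apply H1. apply HW; eapply Rlt_le_trans; eauto; apply Rmin_l.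
  apply close_upd2; auto; eapply Rlt_le_trans; eauto; apply Rmin_r.
Qed.

Lemma SW W f i j p : openg W -> C2g W f -> uW W p -> i <> j ->
  unc (pdF i (pdF j f)) p = unc (pdF j (pdF i f)) p.
Proof.
  intros Ho HC Hp n. pose proof HC as [Hc [He Hi]].
  set (h := fun a b => unc f (upd i a (upd j b p))).
  assert (Hh : forall a b z t, h z t = unc f (upd j t (upd i z (upd i a (upd j b p))))).
  { intros; unfold h; clear -n; brute. }
  assert (Hh' : forall a b z t, h t z = unc f (upd i t (upd j z (upd j a (upd i b p))))).
  { intros; unfold h; clear -n; brute. }
  assert (F1 : forall a b, uW W (upd i a (upd j b p)) ->
     Derive (fun z => Derive (fun t => h z t) b) a = unc (pdF i (pdF j f)) (upd i a (upd j b p))).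
  { intros a b Hab. rewrite <- (DD W f i j _ Ho HC Hab n).
    assert (Ea : get i (upd i a (upd j b p)) = a) by (clear -n; brute).
    assert (Eb : get j (upd i a (upd j b p)) = b) by (clear -n; brute).
    rewrite Ea, Eb. apply Derive_ext. intros z. apply Derive_ext. intros t. apply Hh. }
  assert (F2 : forall a b, uW W (upd j a (upd i b p)) ->
     Derive (fun z => Derive (fun t => h t z) b) a = unc (pdF j (pdF i f)) (upd j a (upd i b p))).
  { intros a b Hab. rewrite <- (DD W f j i _ Ho HC Hab (not_eq_sym n)).
    assert (Ea : get j (upd j a (upd i b p)) = a) by (clear -n; brute).
    assert (Eb : get i (upd j a (upd i b p)) = b) by (clear -n; brute).
    rewrite Ea, Eb. apply Derive_ext. intros z. apply Derive_ext. intros t. apply Hh'. }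
  assert (Ep1 : upd i (get i p) (upd j (get j p) p) = p) by (clear -n; brute).
  assert (Ep2 : upd j (get j p) (upd i (get i p) p) = p) by (clear -n; brute).
  assert (L := F1 (get i p) (get j p) ltac:(rewrite Ep1; auto)). rewrite Ep1 in L.
  assert (L2 := F2 (get j p) (get i p) ltac:(rewrite Ep2; auto)). rewrite Ep2 in L2.
  rewrite <- L, <- L2.
  destruct (Ho p Hp) as [d [Hd Hdp]].
  assert (Box : forall a b, Rabs (a - get i p) < d -> Rabs (b - get j p) < d ->
     uW W (upd i a (upd j b p)) /\ uW W (upd j b (upd i a p))).
  { intros a b Ha Hb. assert (E : upd j b (upd i a p) = upd i a (upd j b p)) by (clear -n; brute).
    rewrite E. split; apply Hdp; apply close_upd2; auto. }
  apply Schwarz.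
  - exists (mkposreal d Hd). intros a b Ha Hb. simpl in Ha, Hb.
    destruct (Box a b Ha Hb) as [B1 B2]. set (q := upd i a (upd j b p)).
    assert (Gi : get i q = a) by (unfold q; clear -n; brute).
    assert (Gj : get j q = b) by (unfold q; clear -n; brute).
    assert (X1 : forall z, h z b = unc f (upd i z q)) by (intros; unfold h, q; clear -n; brute).
    assert (X2 : forall z, h a z = unc f (upd j z q)) by (intros; unfold h, q; clear -n; brute).
    split; [|split; [|split]].
    + apply (ex_derive_ext (fun z => unc f (upd i z q))). intros z. symmetry. apply X1.
      rewrite <- Gi. apply He; auto.
    + apply (ex_derive_ext (fun z => unc f (upd j z q))). intros z. symmetry. apply X2.
      rewrite <- Gj. apply He; auto.
    + apply (ex_derive_ext_loc (fun z => unc (pdF j f) (upd i z q))).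
      * rewrite <- Gi. generalize (locally_W W i q Ho B1). apply filter_imp. intros z Hz.
        symmetry. apply is_derive_unique.
        assert (E : b = get j (upd i z q)) by (rewrite get_upd_ne; auto).
        rewrite E at 1. eapply is_derive_ext; [|apply (pdF_isd W); eauto].
        intros t; simpl. unfold h, q. clear -n; brute.
      * rewrite <- Gi. apply (Hi j); auto.
    + apply (ex_derive_ext_loc (fun z => unc (pdF i f) (upd j z q))).
      * rewrite <- Gj. generalize (locally_W W j q Ho B1). apply filter_imp. intros z Hz.
        symmetry. apply is_derive_unique.
        assert (E : a = get i (upd j z q)) by (rewrite get_upd_ne; auto).
        rewrite E at 1. eapply is_derive_ext; [|apply (pdF_isd W); eauto].
        intros t; simpl. unfold h, q. clear -n; brute.
      * rewrite <- Gj. apply (Hi i); auto.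
  - apply (cont2 W (pdF i (pdF j f)) i j p d); auto. apply Hi.
    intros a b Ha Hb; apply Box; auto.
    intros a b Ha Hb. apply F1. apply Box; auto.
  - apply (cont2 W (pdF j (pdF i f)) i j p d); auto. apply Hi.
    intros a b Ha Hb; apply Box; auto.
    intros a b Ha Hb. rewrite F2. f_equal. clear -n; brute. apply Box; auto.
Qed.
Lemma C2_exd W f : C2g W f -> exd W f.
Proof. intros [_ [H _]]; exact H. Qed.
Lemma C2_exd1 W f i : C2g W f -> exd W (pdF i f).
Proof. intros [_ [_ H]]; apply H. Qed.
Lemma C2_cont W f : C2g W f -> contg W f.
Proof. intros [H _]; exact H. Qed.
Lemma C2_cont1 W f i : C2g W f -> contg W (pdF i f).
Proof. intros [_ [_ H]]; apply H. Qed.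

Ltac cb := cbn [unc upd get pdF uW] in *.

Lemma K1 W Ax Ay Bxx Bxy Byy x y u v : openg W -> C2g W Ax -> C2g W Ay -> C2g W Bxx ->
  C2g W Bxy -> C2g W Byy -> helmholtz W Ax Ay Bxx Bxy Byy -> W x y u v ->
  is_derive (fun t => Dfun Ax Ay x y t v) u (2 * (pd_y Bxx x y u v - pd_x Bxy x y u v)).
Proof.
  intros Ho HAx HAy HBxx HBxy HByy Hh Hp.
  set (p := (x, y, u, v)). assert (Hp' : uW W p) by exact Hp.
  assert (Ea := SW W Ax C3 C4 p Ho HAx Hp' ltac:(discriminate)). cb.
  assert (Eb : pd_yd (pd_xd Ax) x y u v =
     u * pd_yd (pd_x Bxx) x y u v + (1 * pd_y Bxx x y u v + v * pd_yd (pd_y Bxx) x y u v)).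
  { apply (LE W (pd_xd Ax) (fun q => match q with (x', y', u', v') =>
        u' * pd_x Bxx x' y' u' v' + v' * pd_y Bxx x' y' u' v' end) C4 p); auto.
    - intros [[[x' y'] u'] v'] Hq. cb. destruct (Hh x' y' u' v' Hq) as [_ [_ [H3 _]]]. lra.
    - cb. apply isd_plus. apply isd_scal.
      + pose proof (pdF_isd W (pdF C1 Bxx) C4 p (C2_exd1 W Bxx C1 HBxx) Hp') as D; cb; exact D.
      + apply (isd_mult (fun t => t) (fun t => pd_y Bxx x y u t)). apply isd_id.
        pose proof (pdF_isd W (pdF C2 Bxx) C4 p (C2_exd1 W Bxx C2 HBxx) Hp') as D; cb; exact D. }
  assert (Ec1 := SW W Bxx C4 C1 p Ho HBxx Hp' ltac:(discriminate)). cb.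
  assert (Ec2 := SW W Bxx C4 C2 p Ho HBxx Hp' ltac:(discriminate)). cb.
  assert (Ed1 : pd_x (pd_yd Bxx) x y u v = pd_x (pd_xd Bxy) x y u v).
  { apply (LE W (pd_yd Bxx) (unc (pd_xd Bxy)) C1 p); auto.
    - intros [[[x' y'] u'] v'] Hq. cb. destruct (Hh x' y' u' v' Hq) as [H1 _]. exact H1.
    - pose proof (pdF_isd W (pdF C3 Bxy) C1 p (C2_exd1 W Bxy C3 HBxy) Hp') as D; cb; exact D. }
  assert (Ed2 : pd_y (pd_yd Bxx) x y u v = pd_y (pd_xd Bxy) x y u v).
  { apply (LE W (pd_yd Bxx) (unc (pd_xd Bxy)) C2 p); auto.
    - intros [[[x' y'] u'] v'] Hq. cb. destruct (Hh x' y' u' v' Hq) as [H1 _]. exact H1.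
    - pose proof (pdF_isd W (pdF C3 Bxy) C2 p (C2_exd1 W Bxy C3 HBxy) Hp') as D; cb; exact D. }
  assert (Ee1 := SW W Bxy C1 C3 p Ho HBxy Hp' ltac:(discriminate)). cb.
  assert (Ee2 := SW W Bxy C2 C3 p Ho HBxy Hp' ltac:(discriminate)). cb.
  apply (is_derive_ext_loc (fun t => 2 * pd_yd Ax x y t v - 2 * (t * pd_x Bxy x y t v)
                                       - 2 * (v * pd_y Bxy x y t v))).
  - generalize (locally_W W C3 p Ho Hp'). apply filter_imp. intros t Ht. cb.
    destruct (Hh x y t v Ht) as [_ [_ [_ [_ [H5 _]]]]]. unfold Dfun. lra.
  - eapply isd_val.
    + apply isd_minus. apply isd_minus.
      * apply isd_scal.
        pose proof (pdF_isd W (pdF C4 Ax) C3 p (C2_exd1 W Ax C4 HAx) Hp') as D; cb; exact D.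
      * apply isd_scal. apply (isd_mult (fun t => t) (fun t => pd_x Bxy x y t v)). apply isd_id.
        pose proof (pdF_isd W (pdF C1 Bxy) C3 p (C2_exd1 W Bxy C1 HBxy) Hp') as D; cb; exact D.
      * apply isd_scal. apply isd_scal.
        pose proof (pdF_isd W (pdF C2 Bxy) C3 p (C2_exd1 W Bxy C2 HBxy) Hp') as D; cb; exact D.
    + unfold p in *; cb. rewrite Ea, Eb, Ec1, Ec2, Ed1, Ed2, Ee1, Ee2. ring.
Qed.

Lemma K2 W Ax Ay Bxx Bxy Byy x y u v : openg W -> C2g W Ax -> C2g W Ay -> C2g W Bxx ->
  C2g W Bxy -> C2g W Byy -> helmholtz W Ax Ay Bxx Bxy Byy -> W x y u v ->
  is_derive (fun t => Dfun Ax Ay x y u t) v (2 * (pd_y Bxy x y u v - pd_x Byy x y u v)).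
Proof.
  intros Ho HAx HAy HBxx HBxy HByy Hh Hp.
  set (p := (x, y, u, v)). assert (Hp' : uW W p) by exact Hp.
  assert (Ea := SW W Ay C4 C3 p Ho HAy Hp' ltac:(discriminate)). cb.
  assert (Eb : pd_xd (pd_yd Ay) x y u v =
     (1 * pd_x Byy x y u v + u * pd_xd (pd_x Byy) x y u v) + v * pd_xd (pd_y Byy) x y u v).
  { apply (LE W (pd_yd Ay) (fun q => match q with (x', y', u', v') =>
        u' * pd_x Byy x' y' u' v' + v' * pd_y Byy x' y' u' v' end) C3 p); auto.
    - intros [[[x' y'] u'] v'] Hq. cb. destruct (Hh x' y' u' v' Hq) as [_ [_ [_ [H4 _]]]]. lra.
    - cb. apply isd_plus.
      + apply (isd_mult (fun t => t) (fun t => pd_x Byy x y t v)). apply isd_id.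
        pose proof (pdF_isd W (pdF C1 Byy) C3 p (C2_exd1 W Byy C1 HByy) Hp') as D; cb; exact D.
      + apply isd_scal.
        pose proof (pdF_isd W (pdF C2 Byy) C3 p (C2_exd1 W Byy C2 HByy) Hp') as D; cb; exact D. }
  assert (Ec1 := SW W Byy C3 C1 p Ho HByy Hp' ltac:(discriminate)). cb.
  assert (Ec2 := SW W Byy C3 C2 p Ho HByy Hp' ltac:(discriminate)). cb.
  assert (Ed1 : pd_x (pd_xd Byy) x y u v = pd_x (pd_yd Bxy) x y u v).
  { apply (LE W (pd_xd Byy) (unc (pd_yd Bxy)) C1 p); auto.
    - intros [[[x' y'] u'] v'] Hq. cb. destruct (Hh x' y' u' v' Hq) as [_ [H2 _]]. exact H2.
    - pose proof (pdF_isd W (pdF C4 Bxy) C1 p (C2_exd1 W Bxy C4 HBxy) Hp') as D; cb; exact D. }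
  assert (Ed2 : pd_y (pd_xd Byy) x y u v = pd_y (pd_yd Bxy) x y u v).
  { apply (LE W (pd_xd Byy) (unc (pd_yd Bxy)) C2 p); auto.
    - intros [[[x' y'] u'] v'] Hq. cb. destruct (Hh x' y' u' v' Hq) as [_ [H2 _]]. exact H2.
    - pose proof (pdF_isd W (pdF C4 Bxy) C2 p (C2_exd1 W Bxy C4 HBxy) Hp') as D; cb; exact D. }
  assert (Ee1 := SW W Bxy C1 C4 p Ho HBxy Hp' ltac:(discriminate)). cb.
  assert (Ee2 := SW W Bxy C2 C4 p Ho HBxy Hp' ltac:(discriminate)). cb.
  apply (is_derive_ext_loc (fun t => 2 * (u * pd_x Bxy x y u t) + 2 * (t * pd_y Bxy x y u t)
                                       - 2 * pd_xd Ay x y u t)).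
  - generalize (locally_W W C4 p Ho Hp'). apply filter_imp. intros t Ht. cb.
    destruct (Hh x y u t Ht) as [_ [_ [_ [_ [H5 _]]]]]. unfold Dfun. lra.
  - eapply isd_val.
    + apply isd_minus. apply isd_plus.
      * apply isd_scal. apply isd_scal.
        pose proof (pdF_isd W (pdF C1 Bxy) C4 p (C2_exd1 W Bxy C1 HBxy) Hp') as D; cb; exact D.
      * apply isd_scal. apply (isd_mult (fun t => t) (fun t => pd_y Bxy x y u t)). apply isd_id.
        pose proof (pdF_isd W (pdF C2 Bxy) C4 p (C2_exd1 W Bxy C2 HBxy) Hp') as D; cb; exact D.
      * apply isd_scal.
        pose proof (pdF_isd W (pdF C3 Ay) C4 p (C2_exd1 W Ay C3 HAy) Hp') as D; cb; exact D.
    + unfold p in *; cb. rewrite Ea, Eb, Ec1, Ec2, Ed1, Ed2, Ee1, Ee2. ring.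
Qed.
Lemma Rint_RInt f a b : ex_RInt f a b -> Rint f a b = RInt f a b.
Proof.
  intros H. unfold Rint. apply ex_RInt_Reals_0 in H.
  assert (E : exists l, exists pr : Riemann_integrable f a b, RiemannInt pr = l) by (exists (RiemannInt H), H; reflexivity).
  destruct (epsilon_spec (inhabits 0) _ E) as [pr Hpr]. rewrite <- Hpr. symmetry. apply RInt_Reals.
Qed.

Lemma seg_s c nu : Rmin 0 c <= nu <= Rmax 0 c -> exists s, 0 <= s <= 1 /\ nu = s * c.
Proof.
  intros [H1 H2]. destruct (Rtotal_order c 0) as [Hc|[Hc|Hc]].
  - rewrite Rmin_right in H1 by lra. rewrite Rmax_left in H2 by lra.
    assert (Hi : c * / c = 1) by (field; lra).
    assert (Hn : / c < 0) by (apply Rinv_lt_0_compat; lra).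
    exists (nu * / c). split. split; nra. 
    replace (nu * / c * c) with (nu * (c * / c)) by ring. rewrite Hi; ring.
  - subst. rewrite Rmin_left, Rmax_left in * by lra. exists 0. split; [lra|]. lra.
  - rewrite Rmin_left in H1 by lra. rewrite Rmax_right in H2 by lra.
    assert (Hi : c * / c = 1) by (field; lra).
    assert (Hn : 0 < / c) by (apply Rinv_0_lt_compat; lra).
    exists (nu * / c). split. split; nra.
    replace (nu * / c * c) with (nu * (c * / c)) by ring. rewrite Hi; ring.
Qed.

Lemma seg3 W q nu : segment_domain W -> uW W q -> Rmin 0 (get C3 q) <= nu <= Rmax 0 (get C3 q) ->
  uW W (upd C3 nu q).
Proof.
  intros Hs Hq Hn. destruct q as [[[x y] u] v]; cb.
  destruct (seg_s u nu Hn) as [s [Hs1 ->]]. apply (Hs x y u v Hq s Hs1).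
Qed.
Lemma seg4 W q nu : segment_domain W -> uW W q -> Rmin 0 (get C4 q) <= nu <= Rmax 0 (get C4 q) ->
  uW W (upd C4 nu (upd C3 0 q)).
Proof.
  intros Hs Hq Hn. destruct q as [[[x y] u] v]; cb.
  destruct (seg_s v nu Hn) as [s [Hs1 ->]]. apply (Hs x y u v Hq s Hs1).
Qed.

Lemma slice_cont' W f k p0 z : openg W -> contg W f -> uW W (upd k z p0) ->
  continuous (fun t => unc f (upd k t p0)) z.
Proof.
  intros Ho Hc Hz. pose proof (slice_cont W f k (upd k z p0) Ho Hc Hz) as H.
  rewrite get_upd in H. eapply continuous_ext; [|exact H]. intros t; simpl. rewrite upd_upd; auto.
Qed.

Lemma ex_seg W f k p0 b : openg W -> contg W f ->
  (forall nu, Rmin 0 b <= nu <= Rmax 0 b -> uW W (upd k nu p0)) ->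
  ex_RInt (fun nu => unc f (upd k nu p0)) 0 b.
Proof.
  intros Ho Hc Hs. apply (ex_RInt_continuous (V:=R_CompleteNormedModule)). intros z Hz. apply (slice_cont' W); auto.
Qed.

Definition Ig (k : crd) (f : F4) (p0 : P4) (b : R) : R := RInt (fun nu => unc f (upd k nu p0)) 0 b.

Lemma PL W f i k p0 b : openg W -> contg W f -> exd W f -> contg W (pdF i f) -> i <> k ->
  (exists d, 0 < d /\ forall t, Rabs (t - get i p0) < d -> forall nu, Rmin 0 b <= nu <= Rmax 0 b ->
     uW W (upd k nu (upd i t p0))) ->
  is_derive (fun t => Ig k f (upd i t p0) b) (get i p0) (Ig k (pdF i f) p0 b).
Proof.
  intros Ho Hc He Hci n [d [Hd Hs]]. unfold Ig.
  set (F := fun a nu => unc f (upd k nu (upd i a p0))).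
  assert (EF : forall a nu, F a nu = unc f (upd i a (upd k nu (upd i a p0)))).
  { intros; unfold F; clear -n; brute. }
  assert (EF2 : forall a nu z, F z nu = unc f (upd i z (upd k nu (upd i a p0)))).
  { intros; unfold F; clear -n; brute. }
  assert (Gi : forall a nu, get i (upd k nu (upd i a p0)) = a) by (intros; clear -n; brute).
  assert (Gk : forall a nu, get k (upd k nu (upd i a p0)) = nu) by (intros; clear -n; brute).
  assert (Ep : upd i (get i p0) p0 = p0) by apply upd_get.
  eapply isd_val.
  - apply (is_derive_RInt_param F 0 b (get i p0)).
    + apply loc_of. exists d; split; auto. intros x0 Hx0 t Ht.
      apply (ex_derive_ext (fun z => unc f (upd i z (upd k t (upd i x0 p0))))).
      intros z; symmetry; apply EF2.
      pose proof (He i _ (Hs x0 Hx0 t Ht)) as HH; rewrite Gi in HH; exact HH.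
    + intros t Ht. set (q0 := upd k t p0).
      assert (Hq0 : uW W q0) by (unfold q0; rewrite <- Ep; apply Hs; auto;
                                 unfold Rminus; rewrite Rplus_opp_r, Rabs_R0; auto).
      destruct (Ho q0 Hq0) as [d1 [Hd1 Hb]].
      assert (E1 : get i q0 = get i p0) by (unfold q0; rewrite get_upd_ne; auto).
      assert (E2 : get k q0 = t) by (unfold q0; apply get_upd).
      rewrite <- E1, <- E2.
      apply (cont2 W (pdF i f) i k q0 d1); auto.
      * intros a c Ha Hc'. apply Hb. apply close_upd2; auto.
      * intros a c Ha Hc'. apply is_derive_unique.
        assert (HQ : uW W (upd i a (upd k c q0))) by (apply Hb; apply close_upd2; auto).
        assert (E3 : get i (upd i a (upd k c q0)) = a) by (clear -n; brute).
        rewrite <- E3 at 1. eapply is_derive_ext; [|apply (pdF_isd W); eauto].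
        intros z. simpl. unfold F, q0. clear -n; brute.
    + apply loc_of. exists d; split; auto. intros x0 Hx0.
      apply (ex_RInt_continuous (V:=R_CompleteNormedModule)). intros z Hz. apply (slice_cont' W f k (upd i x0 p0) z); auto.
  - apply RInt_ext. intros nu Hnu.
    assert (HQ : uW W (upd k nu p0)).
    { rewrite <- Ep. apply Hs. unfold Rminus; rewrite Rplus_opp_r, Rabs_R0; auto. lra. }
    apply is_derive_unique.
    assert (E3 : get i (upd k nu p0) = get i p0) by (rewrite get_upd_ne; auto).
    rewrite <- E3 at 1. eapply is_derive_ext; [|apply (pdF_isd W); eauto].
    intros z. simpl. unfold F. clear -n; brute.
Qed.
Lemma FL W f k p0 b0 : openg W -> contg W f ->
  (exists d, 0 < d /\ forall c, Rabs (c - b0) < d -> forall nu, Rmin 0 c <= nu <= Rmax 0 c ->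
     uW W (upd k nu p0)) ->
  is_derive (fun c => Ig k f p0 c) b0 (unc f (upd k b0 p0)).
Proof.
  intros Ho Hc [d [Hd Hs]]. unfold Ig.
  apply (is_derive_RInt (fun nu => unc f (upd k nu p0)) (fun c => RInt (fun nu => unc f (upd k nu p0)) 0 c) 0 b0).
  - apply loc_of. exists d; split; auto. intros c Hc'. apply (RInt_correct (V:=R_CompleteNormedModule)).
    apply (ex_seg W f k p0 c Ho Hc). apply Hs; auto.
  - apply (slice_cont' W f k p0 b0 Ho Hc). apply (Hs b0).
    unfold Rminus; rewrite Rplus_opp_r, Rabs_R0; auto.
    split; [apply Rmin_r|apply Rmax_r].
Qed.

Lemma segI W i p : i <> C3 -> openg W -> segment_domain W -> uW W p ->
  exists d, 0 < d /\ forall t, Rabs (t - get i p) < d -> forall nu, Rmin 0 (get C3 p) <= nu <= Rmax 0 (get C3 p) ->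
     uW W (upd C3 nu (upd i t p)).
Proof.
  intros n Ho Hs Hp. destruct (loc_W W i p Ho Hp) as [d [Hd H]]. exists d; split; auto.
  intros t Ht nu Hnu. apply seg3; auto. rewrite get_upd_ne; auto.
Qed.
Lemma segIc W p : openg W -> segment_domain W -> uW W p ->
  exists d, 0 < d /\ forall c, Rabs (c - get C3 p) < d -> forall nu, Rmin 0 c <= nu <= Rmax 0 c ->
     uW W (upd C3 nu p).
Proof.
  intros Ho Hs Hp. destruct (loc_W W C3 p Ho Hp) as [d [Hd H]]. exists d; split; auto.
  intros c Hc nu Hnu. rewrite <- (upd_upd C3 nu c p). apply seg3; auto. rewrite get_upd; auto.
Qed.
Lemma segJ W i p : i <> C3 -> i <> C4 -> openg W -> segment_domain W -> uW W p ->
  exists d, 0 < d /\ forall t, Rabs (t - get i (upd C3 0 p)) < d -> forall nu, Rmin 0 (get C4 p) <= nu <= Rmax 0 (get C4 p) ->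
     uW W (upd C4 nu (upd i t (upd C3 0 p))).
Proof.
  intros n n' Ho Hs Hp. destruct (loc_W W i p Ho Hp) as [d [Hd H]]. exists d; split; auto.
  intros t Ht nu Hnu. rewrite get_upd_ne in Ht by auto.
  replace (upd C4 nu (upd i t (upd C3 0 p))) with (upd C4 nu (upd C3 0 (upd i t p))) by (clear -n n'; brute).
  apply seg4; auto. rewrite get_upd_ne; auto.
Qed.
Lemma segJc W p : openg W -> segment_domain W -> uW W p ->
  exists d, 0 < d /\ forall c, Rabs (c - get C4 p) < d -> forall nu, Rmin 0 c <= nu <= Rmax 0 c ->
     uW W (upd C4 nu (upd C3 0 p)).
Proof.
  intros Ho Hs Hp. destruct (loc_W W C4 p Ho Hp) as [d [Hd H]]. exists d; split; auto.
  intros c Hc nu Hnu.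
  replace (upd C4 nu (upd C3 0 p)) with (upd C4 nu (upd C3 0 (upd C4 c p))) by (clear; brute).
  apply seg4; auto. rewrite get_upd; auto.
Qed.

Definition KI (f : F4) (q : P4) : R := Ig C3 f q (get C3 q).
Definition KJ (f : F4) (q : P4) : R := Ig C4 f (upd C3 0 q) (get C4 q).
Definition KId (i : crd) (f : F4) (p : P4) : R :=
  match i with C3 => unc f p | _ => KI (pdF i f) p end.
Definition KJd (i : crd) (f : F4) (p : P4) : R :=
  match i with C3 => 0 | C4 => unc f (upd C3 0 p) | _ => KJ (pdF i f) p end.

Lemma KI_isd W f i p : openg W -> segment_domain W -> C2g W f -> uW W p ->
  is_derive (fun t => KI f (upd i t p)) (get i p) (KId i f p).
Proof.
  intros Ho Hs HC Hp. pose proof (C2_cont W f HC) as Hc. pose proof (C2_exd W f HC) as He.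
  destruct i.
  - pose proof (PL W f C1 C3 p (get C3 p) Ho Hc He (C2_cont1 W f C1 HC) ltac:(discriminate)
       (segI W C1 p ltac:(discriminate) Ho Hs Hp)) as H.
    eapply is_derive_ext; [|exact H]. intros t. simpl. clear; brute.
  - pose proof (PL W f C2 C3 p (get C3 p) Ho Hc He (C2_cont1 W f C2 HC) ltac:(discriminate)
       (segI W C2 p ltac:(discriminate) Ho Hs Hp)) as H.
    eapply is_derive_ext; [|exact H]. intros t. simpl. clear; brute.
  - pose proof (FL W f C3 p (get C3 p) Ho Hc (segIc W p Ho Hs Hp)) as H. rewrite upd_get in H.
    eapply is_derive_ext; [|exact H]. intros t. simpl. unfold KI, Ig. rewrite get_upd.
    apply RInt_ext. intros; rewrite upd_upd; auto.
  - pose proof (PL W f C4 C3 p (get C3 p) Ho Hc He (C2_cont1 W f C4 HC) ltac:(discriminate)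
       (segI W C4 p ltac:(discriminate) Ho Hs Hp)) as H.
    eapply is_derive_ext; [|exact H]. intros t. simpl. clear; brute.
Qed.

Lemma KJ_isd W f i p : openg W -> segment_domain W -> C2g W f -> uW W p ->
  is_derive (fun t => KJ f (upd i t p)) (get i p) (KJd i f p).
Proof.
  intros Ho Hs HC Hp. pose proof (C2_cont W f HC) as Hc. pose proof (C2_exd W f HC) as He.
  destruct i.
  - pose proof (PL W f C1 C4 (upd C3 0 p) (get C4 p) Ho Hc He (C2_cont1 W f C1 HC) ltac:(discriminate)
       (segJ W C1 p ltac:(discriminate) ltac:(discriminate) Ho Hs Hp)) as H.
    replace (get C1 p) with (get C1 (upd C3 0 p)) by (clear; brute).
    eapply is_derive_ext; [|exact H]. intros t. simpl. clear; brute.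
  - pose proof (PL W f C2 C4 (upd C3 0 p) (get C4 p) Ho Hc He (C2_cont1 W f C2 HC) ltac:(discriminate)
       (segJ W C2 p ltac:(discriminate) ltac:(discriminate) Ho Hs Hp)) as H.
    replace (get C2 p) with (get C2 (upd C3 0 p)) by (clear; brute).
    eapply is_derive_ext; [|exact H]. intros t. simpl. clear; brute.
  - eapply is_derive_ext; [|apply (isd_const (KJ f p))]. intros t. simpl. clear; brute.
  - pose proof (FL W f C4 (upd C3 0 p) (get C4 p) Ho Hc (segJc W p Ho Hs Hp)) as H.
    replace (unc f (upd C4 (get C4 p) (upd C3 0 p))) with (unc f (upd C3 0 p)) in H by (clear; brute).
    eapply is_derive_ext; [|exact H]. intros t. simpl. unfold KJ, Ig. rewrite get_upd.
    apply RInt_ext. intros. clear; brute.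
Qed.
Lemma exR3 W g x y u v : openg W -> segment_domain W -> contg W g -> W x y u v ->
  ex_RInt (fun nu => g x y nu v) 0 u.
Proof.
  intros Ho Hs Hc Hp. exact (ex_seg W g C3 (x,y,u,v) u Ho Hc (fun nu Hnu => seg3 W (x,y,u,v) nu Hs Hp Hnu)).
Qed.
Lemma exR4 W g x y u v : openg W -> segment_domain W -> contg W g -> W x y u v ->
  ex_RInt (fun s => g x y 0 s) 0 v.
Proof.
  intros Ho Hs Hc Hp. exact (ex_seg W g C4 (x,y,0,v) v Ho Hc (fun nu Hnu => seg4 W (x,y,u,v) nu Hs Hp Hnu)).
Qed.

Lemma kx_loc W Bxx Bxy Byy q : openg W -> segment_domain W -> contg W Bxx -> contg W Bxy -> uW W q ->
  unc (f1_x (kappa Bxx Bxy Byy)) q = - (KI Bxx q + KJ Bxy q).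
Proof.
  intros Ho Hs H1 H2 Hq. destruct q as [[[x y] u] v]. cb. unfold KI, KJ, Ig. cb. unfold kappa; cbn [f1_x f1_y].
  rewrite (Rint_RInt _ _ _ (exR3 W Bxx x y u v Ho Hs H1 Hq)).
  rewrite (Rint_RInt _ _ _ (exR4 W Bxy x y u v Ho Hs H2 Hq)). reflexivity.
Qed.
Lemma ky_loc W Bxx Bxy Byy q : openg W -> segment_domain W -> contg W Bxy -> contg W Byy -> uW W q ->
  unc (f1_y (kappa Bxx Bxy Byy)) q = - (KI Bxy q + KJ Byy q).
Proof.
  intros Ho Hs H1 H2 Hq. destruct q as [[[x y] u] v]. cb. unfold KI, KJ, Ig. cb. unfold kappa; cbn [f1_x f1_y].
  rewrite (Rint_RInt _ _ _ (exR3 W Bxy x y u v Ho Hs H1 Hq)).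
  rewrite (Rint_RInt _ _ _ (exR4 W Byy x y u v Ho Hs H2 Hq)). reflexivity.
Qed.

Lemma kap_isd W F f g i p : openg W -> segment_domain W -> C2g W f -> C2g W g -> uW W p ->
  (forall q, uW W q -> unc F q = - (KI f q + KJ g q)) ->
  is_derive (fun t => unc F (upd i t p)) (get i p) (- (KId i f p + KJd i g p)).
Proof.
  intros Ho Hs Hf Hg Hp HF.
  apply (is_derive_ext_loc (fun t => - (KI f (upd i t p) + KJ g (upd i t p)))).
  - generalize (locally_W W i p Ho Hp). apply filter_imp. intros t Ht. symmetry; apply HF; auto.
  - apply isd_opp. apply isd_plus. apply (KI_isd W); auto. apply (KJ_isd W); auto.
Qed.

Lemma kap_pd W F f g i p : openg W -> segment_domain W -> C2g W f -> C2g W g -> uW W p ->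
  (forall q, uW W q -> unc F q = - (KI f q + KJ g q)) ->
  unc (pdF i F) p = - (KId i f p + KJd i g p).
Proof. intros. apply pdF_eq. apply (kap_isd W); auto. Qed.

Lemma kap_exd W F f g : openg W -> segment_domain W -> C2g W f -> C2g W g ->
  (forall q, uW W q -> unc F q = - (KI f q + KJ g q)) -> exd W F.
Proof. intros Ho Hs Hf Hg HF i p Hp. eexists. apply (kap_isd W F f g); eauto. Qed.

Lemma zero_exd W : exd W (fun _ _ _ _ => 0).
Proof. intros i p Hp. exists 0. eapply is_derive_ext; [|apply (isd_const 0)]. intros t; clear; brute. Qed.
Lemma zero_pd i p : unc (pdF i (fun _ _ _ _ => 0)) p = 0.
Proof. apply pdF_eq. eapply is_derive_ext; [|apply (isd_const 0)]. intros t; clear; brute. Qed.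

Lemma FTgen (h dh : R -> R) b : (forall t, Rmin 0 b <= t <= Rmax 0 b -> is_derive h t (dh t)) ->
  (forall t, Rmin 0 b <= t <= Rmax 0 b -> continuous dh t) -> RInt dh 0 b = h b - h 0.
Proof.
  intros H1 H2. apply is_RInt_unique. apply (is_RInt_derive (V:=R_CompleteNormedModule) h dh); auto.
Qed.

Lemma cont_minus (f g : R -> R) x : continuous f x -> continuous g x -> continuous (fun t => f t - g t) x.
Proof. intros; apply (continuous_minus f g x); auto. Qed.

Lemma FT3 W f x y u v : openg W -> segment_domain W -> C2g W f -> W x y u v ->
  RInt (fun nu => pd_xd f x y nu v) 0 u = f x y u v - f x y 0 v.
Proof.
  intros Ho Hs HC Hp. apply (FTgen (fun t => f x y t v)).
  - intros t Ht. pose proof (seg3 W (x,y,u,v) t Hs Hp Ht) as Hq.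
    pose proof (pdF_isd W f C3 _ (C2_exd W f HC) Hq) as D. cb. exact D.
  - intros t Ht. pose proof (seg3 W (x,y,u,v) t Hs Hp Ht) as Hq.
    pose proof (slice_cont W (pdF C3 f) C3 _ Ho (C2_cont1 W f C3 HC) Hq) as D. cb. exact D.
Qed.
Lemma I1 W Ax Ay Bxx Bxy Byy x y u v : openg W -> segment_domain W -> C2g W Ax -> C2g W Ay -> C2g W Bxx ->
  C2g W Bxy -> C2g W Byy -> helmholtz W Ax Ay Bxx Bxy Byy -> W x y u v ->
  RInt (fun nu => pd_y Bxx x y nu v) 0 u - RInt (fun nu => pd_x Bxy x y nu v) 0 u
  = / 2 * Dfun Ax Ay x y u v - / 2 * Dfun Ax Ay x y 0 v.
Proof.
  intros Ho Hs HAx HAy HBxx HBxy HByy Hh Hp.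
  rewrite <- (RInt_minus (V:=R_CompleteNormedModule)).
  2: apply (exR3 W (pd_y Bxx)); auto; apply (C2_cont1 W Bxx C2 HBxx).
  2: apply (exR3 W (pd_x Bxy)); auto; apply (C2_cont1 W Bxy C1 HBxy).
  apply (FTgen (fun t => / 2 * Dfun Ax Ay x y t v) (fun nu => pd_y Bxx x y nu v - pd_x Bxy x y nu v)).
  - intros t Ht. pose proof (seg3 W (x,y,u,v) t Hs Hp Ht) as Hq. cb.
    eapply isd_val. apply isd_scal. apply (K1 W Ax Ay Bxx Bxy Byy); auto. field.
  - intros t Ht. pose proof (seg3 W (x,y,u,v) t Hs Hp Ht) as Hq.
    pose proof (slice_cont W (pdF C2 Bxx) C3 _ Ho (C2_cont1 W Bxx C2 HBxx) Hq) as D1.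
    pose proof (slice_cont W (pdF C1 Bxy) C3 _ Ho (C2_cont1 W Bxy C1 HBxy) Hq) as D2. cb.
    apply cont_minus; auto.
Qed.

Lemma I2 W Ax Ay Bxx Bxy Byy x y u v : openg W -> segment_domain W -> C2g W Ax -> C2g W Ay -> C2g W Bxx ->
  C2g W Bxy -> C2g W Byy -> helmholtz W Ax Ay Bxx Bxy Byy -> W x y u v ->
  RInt (fun s => pd_y Bxy x y 0 s) 0 v - RInt (fun s => pd_x Byy x y 0 s) 0 v
  = / 2 * Dfun Ax Ay x y 0 v - / 2 * Dfun Ax Ay x y 0 0.
Proof.
  intros Ho Hs HAx HAy HBxx HBxy HByy Hh Hp.
  rewrite <- (RInt_minus (V:=R_CompleteNormedModule)).
  2: apply (exR4 W (pd_y Bxy) x y u v); auto; apply (C2_cont1 W Bxy C2 HBxy).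
  2: apply (exR4 W (pd_x Byy) x y u v); auto; apply (C2_cont1 W Byy C1 HByy).
  apply (FTgen (fun t => / 2 * Dfun Ax Ay x y 0 t) (fun s => pd_y Bxy x y 0 s - pd_x Byy x y 0 s)).
  - intros t Ht. pose proof (seg4 W (x,y,u,v) t Hs Hp Ht) as Hq. cb.
    eapply isd_val. apply isd_scal. apply (K2 W Ax Ay Bxx Bxy Byy); auto. field.
  - intros t Ht. pose proof (seg4 W (x,y,u,v) t Hs Hp Ht) as Hq.
    pose proof (slice_cont W (pdF C2 Bxy) C4 _ Ho (C2_cont1 W Bxy C2 HBxy) Hq) as D1.
    pose proof (slice_cont W (pdF C1 Byy) C4 _ Ho (C2_cont1 W Byy C1 HByy) Hq) as D2. cb.
    apply cont_minus; auto.
Qed.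

Lemma I3 W Bxx Bxy x y u v : openg W -> segment_domain W -> C2g W Bxy ->
  (forall x y u v, W x y u v -> pd_yd Bxx x y u v = pd_xd Bxy x y u v) -> W x y u v ->
  RInt (fun nu => pd_yd Bxx x y nu v) 0 u = Bxy x y u v - Bxy x y 0 v.
Proof.
  intros Ho Hs HC H1 Hp. rewrite <- (FT3 W Bxy x y u v); auto.
  apply RInt_ext. intros t Ht. apply H1.
  apply (seg3 W (x,y,u,v) t Hs Hp). cb. lra.
Qed.

Theorem theorem3p3 (W : Dom4) (Ax Ay Bxx Bxy Byy : F4) :
  open4 W -> segment_domain W ->
  smooth_on W Ax -> smooth_on W Ay ->
  smooth_on W Bxx -> smooth_on W Bxy -> smooth_on W Byy ->
  helmholtz W Ax Ay Bxx Bxy Byy ->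
  form1_has_partials_on W (kappa Bxx Bxy Byy) /\
  form2_eq_on W (sub2 (alpha' Ax Ay Bxx Bxy Byy) (omega Ax Ay))
                (dform1 (kappa Bxx Bxy Byy)).
Proof.
  intros Ho4 Hs sAx sAy sBxx sBxy sByy Hh.
  pose proof (open_openg W Ho4) as Ho.
  pose proof (smooth_C2 W Ax sAx) as HAx. pose proof (smooth_C2 W Ay sAy) as HAy.
  pose proof (smooth_C2 W Bxx sBxx) as HBxx. pose proof (smooth_C2 W Bxy sBxy) as HBxy.
  pose proof (smooth_C2 W Byy sByy) as HByy.
  assert (KX := kx_loc W Bxx Bxy Byy). assert (KY := ky_loc W Bxx Bxy Byy).
  assert (KX' : forall q, uW W q -> unc (f1_x (kappa Bxx Bxy Byy)) q = - (KI Bxx q + KJ Bxy q)).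
  { intros q Hq. apply KX; auto. apply (C2_cont W); auto. apply (C2_cont W); auto. }
  assert (KY' : forall q, uW W q -> unc (f1_y (kappa Bxx Bxy Byy)) q = - (KI Bxy q + KJ Byy q)).
  { intros q Hq. apply KY; auto. apply (C2_cont W); auto. apply (C2_cont W); auto. }
  split.
  - split; [|split; [|split]]; apply exd_hp.
    + apply (kap_exd W _ Bxx Bxy); auto.
    + apply (kap_exd W _ Bxy Byy); auto.
    + apply zero_exd.
    + apply zero_exd.
  - intros x y u v Hp.
    assert (Hp' : uW W (x,y,u,v)) by exact Hp.
    pose proof (fun i => kap_pd W _ Bxx Bxy i (x,y,u,v) Ho Hs HBxx HBxy Hp' KX') as PX.
    pose proof (fun i => kap_pd W _ Bxy Byy i (x,y,u,v) Ho Hs HBxy HByy Hp' KY') as PY.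
    pose proof (PX C2) as X2. pose proof (PX C3) as X3. pose proof (PX C4) as X4.
    pose proof (PY C1) as Y1. pose proof (PY C3) as Y3. pose proof (PY C4) as Y4.
    pose proof (zero_pd C1 (x,y,u,v)) as Z1. pose proof (zero_pd C2 (x,y,u,v)) as Z2.
    pose proof (zero_pd C3 (x,y,u,v)) as Z3. pose proof (zero_pd C4 (x,y,u,v)) as Z4.
    clear PX PY. unfold KId, KJd, KI, KJ, Ig in *. cb.
    pose proof (I1 W Ax Ay Bxx Bxy Byy x y u v Ho Hs HAx HAy HBxx HBxy HByy Hh Hp) as E1.
    pose proof (I2 W Ax Ay Bxx Bxy Byy x y u v Ho Hs HAx HAy HBxx HBxy HByy Hh Hp) as E2.
    pose proof (I3 W Bxx Bxy x y u v Ho Hs HBxy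
                  (fun x y u v H => proj1 (Hh x y u v H)) Hp) as E3.
    pose proof (I3 W Bxy Byy x y u v Ho Hs HByy
                  (fun x y u v H => eq_sym (proj1 (proj2 (Hh x y u v H)))) Hp) as E4.
    unfold sub2, alpha', omega, dform1, kappa in *. cbn [f2_xy f2_xxd f2_xyd f2_yxd f2_yyd f2_xdyd f1_x f1_y f1_xd f1_yd] in *.
    repeat split.
    + rewrite X2, Y1. lra.
    + rewrite X3, Z1. lra.
    + rewrite X4, Z1. lra.
    + rewrite Y3, Z2. lra.
    + rewrite Y4, Z2. lra.
    + rewrite Z3, Z4. lra.
Qed.
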